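(* Let $m\ge3$ be odd and $n\ge2$. The $m$th order $n$-dimensional Hilbert tensor $\mathcal{A}=(a_{i_1\dots i_m})$, $a_{i_1\dots i_m}=\frac{1}{i_1+\cdots+i_m-m+1}$ for $i_1,\dots,i_m\in\{1,\dots,n\}$, is strongly positive definite.
   Context: For $\mathbf{x}\in\mathbb{R}^n$, $\mathcal{A}\mathbf{x}^{m-1}$ is the vector with $i$th component $\sum_{i_2,\dots,i_m}a_{ii_2\dots i_m}x_{i_2}\cdots x_{i_m}$. For odd $m$ and symmetric $\mathcal{A}$, $\mathcal{A}$ is strongly positive definite if $\mathcal{A}\mathbf{x}^{m-1}>\mathbf{0}$ componentwise for all nonzero $\mathbf{x}\in\mathbb{R}^n$. *)

(* Defs.v *)
From mathcomp Require Import all_boot all_order all_fingroup all_algebra.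
From mathcomp Require Import reals.
Set Implicit Arguments. Unset Strict Implicit. Unset Printing Implicit Defensive.
Import Order.TTheory GRing.Theory Num.Theory.
Local Open Scope ring_scope.

(* An m-th order n-dimensional real tensor: a function of index tuples
   (i_1,...,i_m), encoded as finite functions 'I_m -> 'I_n (0-based). *)
Definition tensor (R : Type) (m n : nat) := {ffun 'I_m -> 'I_n} -> R.

Definition symmetric_tensor (R : Type) (m n : nat) (A : tensor R m n) : Prop :=
  forall (s : {perm 'I_m}) (idx : {ffun 'I_m -> 'I_n}),
    A [ffun k => idx (s k)] = A idx.

(* (A x^{m-1})_i = sum_{i_2..i_m} a_{i i_2 .. i_m} x_{i_2} ... x_{i_m}:
   sum over index tuples whose first entry (position 0) equals i, with the
   product of x over the remaining positions. *)
Definition tensor_apply (R : numDomainType) (m n : nat) (A : tensor R m n)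
  (x : 'I_n -> R) (i : 'I_n) : R :=
  \sum_(idx : {ffun 'I_m -> 'I_n} |
         [forall k : 'I_m, (val k == 0%N) ==> (idx k == i)])
     A idx * \prod_(k : 'I_m | val k != 0%N) x (idx k).

Definition strongly_positive_definite (R : numDomainType) (m n : nat)
  (A : tensor R m n) : Prop :=
  forall x : 'I_n -> R, (exists j, x j != 0) ->
    forall i : 'I_n, 0 < tensor_apply A x i.

(* Hilbert tensor: a_{i_1..i_m} = 1/(i_1+...+i_m - m + 1) with 1-based
   indices; with 0-based indices this is 1/(sum of indices + 1). *)
Definition hilbert_tensor (R : numFieldType) (m n : nat) : tensor R m n :=
  fun idx => ((\sum_(k : 'I_m) val (idx k)).+1%:R)^-1.

(* Main.v *)
Require Import Defs.
From mathcomp Require Import all_boot all_order all_fingroup all_algebra.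
From mathcomp Require Import reals polyrcf.
Import Order.TTheory GRing.Theory Num.Theory.
Local Open Scope ring_scope.

Lemma L_pos (R : realType) (q : {poly R}) (N : nat) :
  (size q <= N)%N -> q != 0 -> (forall t : R, 0 <= t <= 1 -> 0 <= q.[t]) ->
  0 < \sum_(k < N) q`_k / k.+1%:R.
Proof.
move=> hq qn0 hpos.
pose Q := \poly_(k < N.+1) (if k is k'.+1 then q`_k' / k%:R else 0).
have dQ : Q^`() = q.
  apply/polyP => j; rewrite coef_deriv coef_poly ltnS.
  case: ltnP => hj.
    by rewrite -[LHS]mulr_natr divfK // pnatr_eq0.
  by rewrite mul0rn nth_default // (leq_trans hq hj).
have Q0 : Q.[0] = 0 by rewrite horner_coef0 coef_poly /= ?if_same.
have Q1 : Q.[1] = \sum_(k<N) q`_k / k.+1%:R.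
  rewrite horner_poly big_ord_recl /= mul0r add0r; apply: eq_bigr => k _.
  by rewrite expr1n mulr1.
have mono : {in `[0, 1] &, {homo horner Q : x y / x <= y}}.
  apply: ler_hornerW => t ht; rewrite dQ; apply: hpos.
  by rewrite !ltW ?(itvP ht).
have Q01 : Q.[0] <= Q.[1] by apply: mono; rewrite ?in_itv /= ?lexx ?ler01.
have : 0 <= Q.[1] by rewrite -Q0.
rewrite -Q1 le_eqVlt => /orP[/eqP h0|//]; exfalso; have h := esym h0.
have Qt : forall t, 0 <= t <= 1 -> Q.[t] = 0.
  move=> t /andP[t0 t1]; apply/le_anti/andP; split; [rewrite -h|rewrite -Q0];
  by apply: mono; rewrite ?in_itv /= ?t0 ?t1 ?lexx ?ler01.
have QZ : Q = 0.
  apply: (@roots_geq_poly_eq0 _ Q [seq (k.+1%:R)^-1 | k <- iota 0 (size Q)]).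
  - apply/allP => r /mapP[k _ ->]; apply/rootP/Qt.
    by rewrite invr_ge0 ler0n invf_le1 ?ltr0Sn // ler1n.
  - rewrite map_inj_uniq ?iota_uniq // => a b /invr_inj /eqP.
    by rewrite eqr_nat => /eqP [].
  - by rewrite size_map size_iota.
by move: qn0; rewrite -dQ QZ deriv0 eqxx.
Qed.
Lemma prod_scaleX (R : realType) (I : finType) (a : I -> R) (e : I -> nat) :
  \prod_(k : I) (a k *: 'X^(e k)) = (\prod_k a k) *: ('X^(\sum_k e k) : {poly R}).
Proof.
elim/big_rec3: _ => [|k y1 y2 y3 _ ->]; first by rewrite scale1r expr0.
by rewrite -scalerAl -scalerAr scalerA exprD.
Qed.

Lemma sum_coefX (R : realType) (c : R) (e N : nat) : (e < N)%N ->
  \sum_(k < N) (c *: ('X^e : {poly R}))`_k / k.+1%:R = c / e.+1%:R.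
Proof.
move=> he; rewrite (bigD1 (Ordinal he)) //= coefZ coefXn eqxx mulr1 big1 ?addr0 //.
move=> k /negbTE kn; rewrite coefZ coefXn.
have -> : (nat_of_ord k == e) = false by rewrite -kn.
by rewrite mulr0 mul0r.
Qed.

Theorem corollary3p7 (R : realType) (m n : nat) :
  (3 <= m)%N -> odd m -> (2 <= n)%N ->
  symmetric_tensor (@hilbert_tensor R m n) /\
  strongly_positive_definite (@hilbert_tensor R m n).
Proof.
move=> m3 modd n2; split.
  move=> s idx; rewrite /hilbert_tensor.
  rewrite [in RHS](reindex_inj (@perm_inj _ s)) /=.
  by congr ((_ : nat).+1%:R^-1); apply: eq_bigr => k _; rewrite ffunE.
move=> x [j xj] i.
pose p : {poly R} := \sum_(j0 < n) x j0 *: 'X^j0.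
pose F := fun (k : 'I_m) (j0 : 'I_n) =>
  (if val k == 0%N then (j0 == i)%:R *: 'X^j0 else x j0 *: 'X^j0 : {poly R}).
pose P := \prod_(k : 'I_m) \sum_(j0 : 'I_n) F k j0.
pose N := maxn (size P) (m * n).+1.
have key : tensor_apply (@hilbert_tensor R m n) x i = \sum_(k < N) P`_k / k.+1%:R.
  rewrite /P bigA_distr_bigA /=.
  under eq_bigr do rewrite coef_sum mulr_suml.
  rewrite exchange_big /= /tensor_apply big_mkcond /=; apply: eq_bigr => f _.
  have -> : \prod_k F k (f k) =
      (\prod_k (if val k == 0%N then (f k == i)%:R else x (f k))) *:
      'X^(\sum_k val (f k)).
    rewrite -prod_scaleX; apply: eq_bigr => k _; rewrite /F.
    by case: ifP.
  rewrite sum_coefX; last first.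
    apply: (@leq_trans (m * n).+1); last exact: leq_maxr.
    rewrite ltnS; apply: (@leq_trans (\sum_(k : 'I_m) n)).
      by apply: leq_sum => k _; exact: ltnW (ltn_ord _).
    by rewrite sum_nat_const card_ord.
  rewrite [in RHS](bigID (fun k : 'I_m => val k == 0%N)) /=.
  have E1 : \prod_(k < m | val k == 0%N)
      (if val k == 0%N then (f k == i)%:R else x (f k)) =
      \prod_(k < m | val k == 0%N) (f k == i)%:R :> R.
    by apply: eq_bigr => k ->.
  have E2 : \prod_(k < m | val k != 0%N)
      (if val k == 0%N then (f k == i)%:R else x (f k)) =
      \prod_(k < m | val k != 0%N) x (f k).
    by apply: eq_bigr => k /negbTE ->.
  rewrite E1 E2.
  case: ifP => hc.
    rewrite [in RHS]big1 ?mul1r; last first.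
      by move=> k k0; move/forallP: hc => /(_ k); rewrite k0 /= => ->.
    by rewrite /hilbert_tensor mulrC.
  move/negbT: hc; rewrite negb_forall => /existsP[k]; rewrite negb_imply.
  case/andP => k0 /negbTE fk.
  by rewrite (bigD1 k) //= fk !mul0r.
have m0 : (0 < m)%N by apply: leq_trans m3.
pose k0 := Ordinal m0.
have PE : P = 'X^i * p ^+ m.-1.
  rewrite /P (bigD1 k0) //=; congr (_ * _).
    rewrite (bigD1 i) //= /F /= eqxx scale1r big1 ?addr0 // => k /negbTE ki.
    by rewrite ki scale0r.
  rewrite (eq_bigr (fun _ => p)); last first.
    move=> k kk0; apply: eq_bigr => j0 _; rewrite /F.
    have -> : (val k == 0%N) = false.
      by apply/negbTE; apply: contra kk0 => /eqP h; apply/eqP/val_inj.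
    by [].
  by rewrite prodr_const cardC1 card_ord.
have pn0 : p != 0.
  apply/eqP => h; move: xj; have <- : p`_j = x j.
    rewrite /p coef_sum (bigD1 j) //= coefZ coefXn eqxx mulr1 big1 ?addr0 //.
    move=> k /negbTE kj; rewrite coefZ coefXn.
    have -> : (nat_of_ord j == k) = false by rewrite eq_sym -kj.
    by rewrite mulr0.
  by rewrite h coef0 eqxx.
rewrite key; apply: L_pos; first exact: leq_maxl.
- by rewrite PE mulf_neq0 ?expf_neq0 ?polyX_eq0.
move=> t /andP[t0 t1]; rewrite PE hornerM !horner_exp hornerX.
apply: mulr_ge0; first exact: exprn_ge0.
have ev : ~~ odd m.-1.
  by move: modd; rewrite -[m in odd m](prednK m0) /=.
rewrite -(odd_double_half m.-1) (negbTE ev) add0n -muln2 exprM.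
by rewrite sqr_ge0.
Qed.
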